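(* For every finite bounded commutative BCK-algebra $\mathcal A$, either every $x\in\mathcal A$ satisfies $x\vee\neg x=1$, or $\operatorname{emd}(\mathcal A)\le \frac23$. That is, the equation $x\vee\neg x=1$ has finite satisfiability gap $\frac13$ among bounded commutative BCK-algebras. Moreover the value $\frac23$ is attained: $\operatorname{emd}(\mathcal C_3)=\frac23$ (and in general $\operatorname{emd}(\mathcal C_n)=\frac2n$ for $n\ge2$).
   Context: A BCK-algebra is a set $A$ with a binary operation $\cdot$ and a constant $0$ such that for all $x,y,z\in A$: (BCK1) $((x\cdot y)\cdot(x\cdot z))\cdot(z\cdot y)=0$; (BCK2) $(x\cdot(x\cdot y))\cdot y=0$; (BCK3) $x\cdot x=0$; (BCK4) $0\cdot x=0$; (BCK5) $x\cdot y=0$ and $y\cdot x=0$ imply $x=y$. Define $x\wedge y:=y\cdot(y\cdot x)$; the algebra is commutative if $x\wedge y=y\wedge x$ for all $x,y$. A bounded BCK-algebra is a BCK-algebra with a distinguished element $1$ such that $x\cdot 1=0$ for all $x$; then $\neg x:=1\cdot x$ and $x\vee y:=\neg(\neg x\wedge\neg y)$. For a finite bounded commutative BCK-algebra $\mathcal A$, $\operatorname{emd}(\mathcal A)=|\{x\in\mathcal A: x\vee\neg x=1\}|/|\mathcal A|$. For $n\ge 2$, $\mathcal C_n$ is the BCK-algebra with carrier $\{0,1,\dots,n-1\}$ and $x\cdot y=\max\{x-y,0\}$, regarded as bounded with $1=n-1$. *)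

(* Defs.v *)
From mathcomp Require Import all_boot all_order all_algebra.
Set Implicit Arguments.
Unset Strict Implicit.
Unset Printing Implicit Defensive.
Import GRing.Theory Num.Theory.

Definition is_BCK (T : Type) (mul : T -> T -> T) (zero : T) : Prop :=
  (forall x y z, mul (mul (mul x y) (mul x z)) (mul z y) = zero) /\
  (forall x y, mul (mul x (mul x y)) y = zero) /\
  (forall x, mul x x = zero) /\
  (forall x, mul zero x = zero) /\
  (forall x y, mul x y = zero -> mul y x = zero -> x = y).

Definition bmeet (T : Type) (mul : T -> T -> T) (x y : T) : T := mul y (mul y x).

Definition is_commutative_BCK (T : Type) (mul : T -> T -> T) (zero : T) : Prop :=
  is_BCK mul zero /\ forall x y, bmeet mul x y = bmeet mul y x.

Definition is_bounded_commutative_BCK (T : Type) (mul : T -> T -> T) (zero one : T)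
  : Prop :=
  is_commutative_BCK mul zero /\ forall x, mul x one = zero.

Definition bneg (T : Type) (mul : T -> T -> T) (one x : T) : T := mul one x.

Definition bjoin (T : Type) (mul : T -> T -> T) (one x y : T) : T :=
  bneg mul one (bmeet mul (bneg mul one x) (bneg mul one y)).

Definition emd (T : finType) (mul : T -> T -> T) (one : T) : rat :=
  (#|[set x : T | bjoin mul one x (bneg mul one x) == one]|%:R / #|T|%:R)%R.

(* The chain C_n on {0,...,n-1}, x . y = max(x - y, 0) (truncated subtraction). *)
Definition Cmul (n : nat) (x y : 'I_n) : 'I_n :=
  Ordinal (leq_ltn_trans (leq_subr y x) (ltn_ord x)).

Definition Czero (m : nat) : 'I_m.+1 := ord0.
Definition Ctop (m : nat) : 'I_m.+1 := ord_max.

(* Main.v *)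
Require Import Defs.
From mathcomp Require Import all_boot all_order all_algebra zify.
Import GRing.Theory Num.Theory.
From mathcomp Require Import ring lra.

Lemma chain_bck m : is_bounded_commutative_BCK (@Cmul m.+2) (Czero m.+1) (Ctop m.+1).
Proof.
split; [split; [split|]|].
- move=> x y z; apply: ord_inj => /=; lia.
- split; [|split; [|split]].
  + move=> x y; apply: ord_inj => /=; lia.
  + move=> x; apply: ord_inj => /=; lia.
  + move=> x; apply: ord_inj => /=; lia.
  + move=> x y /(congr1 val) /= h1 /(congr1 val) /= h2; apply: ord_inj; lia.
- move=> x y; apply: ord_inj; rewrite /bmeet /=; lia.
- move=> x; apply: ord_inj => /=; have := ltn_ord x; lia.
Qed.

Lemma chain_emd m : emd (@Cmul m.+2) (Ctop m.+1) = (2%:R / (m.+2)%:R)%R.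
Proof.
rewrite /emd card_ord.
have -> : [set x : 'I_m.+2 | bjoin (@Cmul m.+2) (Ctop m.+1) x (bneg (@Cmul m.+2) (Ctop m.+1) x) == Ctop m.+1]
   = [set ord0; ord_max].
  apply/setP => x; rewrite !inE -!(inj_eq val_inj) /=.
  have := ltn_ord x; move: (nat_of_ord x) => k hk.
  case: k hk => [|k] hk /=.
    apply/eqP; lia.
  apply/eqP/eqP; lia.
by rewrite cards2.
Qed.

Lemma abs_count (T : finType) (mul : T -> T -> T) (zero one : T) :
  is_bounded_commutative_BCK mul zero one ->
  (forall x, bjoin mul one x (bneg mul one x) = one) \/
  (3 * #|[set x : T | bjoin mul one x (bneg mul one x) == one]| <= 2 * #|T|)%N.
Proof.
move=> [[HB C] Bd]; move: HB => [B1 [B2 [B3 [B4 B5]]]].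
rewrite /bjoin /bneg /bmeet in C *.
have x0 : forall x, mul x zero = x.
  move=> x.
  have h1 : mul (mul x zero) x = zero by have := B2 x x; rewrite B3.
  have h2 : mul x (mul x zero) = zero.
    apply: (B5 _ _ (B2 x zero)); exact: B4.
  exact: (B5 _ _ h1 h2).
have trans : forall x y z, mul x y = zero -> mul y z = zero -> mul x z = zero.
  move=> x y z h1 h2; have := B1 x z y; by rewrite h1 h2 !x0.
have antiR : forall x y z, mul x y = zero -> mul (mul z y) (mul z x) = zero.
  move=> x y z h; have := B1 z y x; by rewrite h x0.
have monL : forall x y z, mul x y = zero -> mul (mul x z) (mul y z) = zero.
  move=> x y z h; have := B1 x z y; by rewrite h x0.
have subl : forall x y, mul (mul x y) x = zero.
  move=> x y; have := B1 x y zero; by rewrite B4 !x0.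
have meetE : forall x y, mul x y = zero -> mul y (mul y x) = x.
  by move=> x y h; rewrite -C h x0.
have nn : forall x, mul one (mul one x) = x.
  by move=> x; rewrite -C Bd x0.
have glb : forall x y z, mul z x = zero -> mul z y = zero ->
    mul z (mul y (mul y x)) = zero.
  move=> x y z h1 h2; rewrite -{1}(meetE _ _ h2).
  by apply: (antiR); apply: (antiR).
have mle1 : forall x y, mul (mul y (mul y x)) y = zero by move=> x y; apply: (subl).
have mle2 : forall x y, mul (mul y (mul y x)) x = zero by move=> x y; rewrite -C; apply: (subl).
have negA : forall x y, mul x y = zero -> mul (mul one y) (mul one x) = zero.
  by move=> x y h; apply: antiR.
have le0 : forall z, mul z zero = zero -> z = zero by move=> z; rewrite x0.
pose Bo x := mul (mul one x) (mul (mul one x) x) == zero.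
have isB : forall x, (mul one (mul (mul one (mul one x)) (mul (mul one (mul one x)) (mul one x))) == one) = Bo x.
  move=> x; rewrite nn /Bo -C; apply/eqP/eqP => h.
    by rewrite -[LHS]nn h Bd.
  by rewrite h x0.
have Bneg : forall x, Bo x -> Bo (mul one x).
  by move=> x; rewrite /Bo nn -C.
have Bzero : forall b z, Bo b -> mul z b = zero -> mul z (mul one b) = zero -> z = zero.
  move=> b z /eqP hb h1 h2; apply: le0.
  by have := glb _ _ _ h1 h2; rewrite hb.
set S := [set x | _].
have -> : S = [set x | Bo x] by apply/setP => x; rewrite !inE isB.
case: (boolP [forall x, Bo x]) => [/forallP hall|/forallP hn]; [left|right].
  by move=> x; apply/eqP; rewrite isB.
have [a ha] : exists a, ~~ Bo a.
  by apply/existsP; rewrite -negb_forall; apply/negP => /forallP.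
set d := mul (mul one a) (mul (mul one a) a).
have dnz : d != zero by exact: ha.
have dA : mul d a = zero by apply: (mle2).
have dle : mul d (mul one d) = zero.
  apply: (trans _ (mul one a)); first by apply: (mle1).
  by apply: (negA).
pose P := fun y => (y != zero) && (mul y d == zero).
have Pd : P d by rewrite /P dnz B3 eqxx.
pose below := fun y => #|[set z | mul z y == zero]|.
have [al /andP [alnz /eqP ald] Hmin] := @arg_minnP T d P below Pd.
have atom : forall y, mul y al = zero -> y = zero \/ y = al.
  move=> y hy; case: (eqVneq y zero) => [->|ynz]; first by left.
  right.
  have Py : P y by rewrite /P ynz (trans _ _ _ hy ald) eqxx.
  have := Hmin y Py; rewrite /below => hc.
  have sub : [set z | mul z y == zero] \subset [set z | mul z al == zero].
    apply/subsetP => z; rewrite !inE => /eqP hz; apply/eqP; exact: (trans _ _ _ hz hy).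
  have := eqEcard [set z | mul z y == zero] [set z | mul z al == zero].
  rewrite sub hc => /eqP E.
  have : al \in [set z | mul z y == zero] by rewrite E inE B3.
  rewrite inE => /eqP hay; exact: B5.
have alneg : mul al (mul one al) = zero.
  apply: (trans _ _ _ ald); apply: (trans _ _ _ dle); by apply: (negA).
have part : forall b, mul al b = zero \/ mul al (mul one b) = zero.
  move=> b.
  have := atom (mul b (mul b al)) (mle2 _ _); case=> hm.
    right; apply: le0.
    have h1 : mul (mul al (mul one b)) al = zero by apply: (subl).
    have h2 : mul (mul al (mul one b)) b = zero.
      have := monL al one (mul one b) (Bd al); by rewrite nn.
    by have := glb _ _ _ h1 h2; rewrite hm.
  by left; rewrite -hm; apply: (mle1).
pose f := fun b => mul (mul one al) (mul (mul one al) b).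
have fnB : forall b, mul al b = zero -> ~~ Bo (f b).
  move=> b hb; apply/negP => hc.
  have h1 : mul al (f b) = zero by apply: (glb).
  have h2 : mul (f b) (mul one al) = zero by apply: (mle1).
  have h3 : mul al (mul one (f b)) = zero by have := negA _ _ h2; rewrite nn.
  by move/eqP: alnz; apply; apply: (Bzero _ _ hc).
have finj : forall b b', Bo b -> Bo b' -> mul al b = zero -> mul al b' = zero ->
    f b = f b' -> mul b b' = zero.
  move=> b b' hb hb' h h' E.
  have cb' : mul (f b) b' = zero by rewrite E; apply: (mle2).
  have s1 : mul (mul b b') (mul b (f b)) = zero by apply: (antiR).
  have s2 : mul b (f b) = mul b (mul one al).
    by rewrite /f C; apply: (meetE); apply: (subl).
  have s3 : mul (mul b (mul one al)) al = zero.
    by have := monL b one (mul one al) (Bd b); rewrite nn.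
  have s4 : mul (mul b b') al = zero by apply: (trans _ _ _ s1); rewrite s2.
  apply: (Bzero b' _ hb').
    exact: (trans _ _ _ s4 h').
  exact: (monL _ _ _ (Bd b)).
set SB := [set x | Bo x].
set L := [set x | mul al x == zero].
have c1 : #|SB :&: L| <= #|~: SB|.
  rewrite -(@card_in_imset _ _ f).
    apply: subset_leq_card; apply/subsetP => y /imsetP [b].
    rewrite !inE => /andP [_ /eqP hb] ->; exact: fnB.
  move=> b b'; rewrite !inE => /andP [hb /eqP h] /andP [hb' /eqP h'] E.
  apply: B5; [exact: finj | exact: finj].
have c0 : #|SB :\: L| <= #|SB :&: L|.
  rewrite -(@card_in_imset _ _ (mul one)).
    apply: subset_leq_card; apply/subsetP => y /imsetP [b].
    rewrite !inE => /andP [/negP hb hbB] ->; rewrite Bneg //=.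
    by case: (part b) => h //; [case: hb; apply/eqP | apply/eqP].
  by move=> b b' _ _ E; rewrite -(nn b) E nn.
have := cardsID L SB; have := cardsC SB.
lia.
Qed.

Local Open Scope ring_scope.

Theorem theorem4p2 :
  (forall (T : finType) (mul : T -> T -> T) (zero one : T),
      is_bounded_commutative_BCK mul zero one ->
      (forall x : T, bjoin mul one x (bneg mul one x) = one)
      \/ emd mul one <= 2%:R / 3%:R) /\
  emd (@Cmul 3) (Ctop 2) = 2%:R / 3%:R /\
  (forall m : nat,
      is_bounded_commutative_BCK (@Cmul m.+2) (Czero m.+1) (Ctop m.+1) /\
      emd (@Cmul m.+2) (Ctop m.+1) = 2%:R / (m.+2)%:R).
Proof.
split; last first.
  split; first exact: (chain_emd 1).
  by move=> m; split; [exact: chain_bck | exact: chain_emd].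
move=> T mul zero one H.
case: (@abs_count T mul zero one H) => [h|h]; [by left | right].
rewrite /emd.
set s := #|_|.
have tpos : (0 < #|T|)%N by apply/card_gt0P; exists zero.
have h' : (3 * s)%:R <= (2 * #|T|)%:R :> rat by rewrite ler_nat.
rewrite !natrM in h'.
have tq : 0 < #|T|%:R :> rat by rewrite ltr0n.
rewrite ler_pdivrMr //.
lra.
Qed.
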